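(* The center of the formal Burau group $\mathcal{B}$ is generated by $\beta(\Delta)$, where $\Delta=(\sigma_1\sigma_2\sigma_1)^2$. In particular, $Z(\mathcal{B})=Z(\beta(B_3))$.
   Context: Let $B_3$ be the braid group with standard generators $\sigma_1,\sigma_2$ and $\beta$ the Burau representation $\beta(\sigma_1)=\begin{pmatrix}1-t&t&0\\1&0&0\\0&0&1\end{pmatrix}$, $\beta(\sigma_2)=\begin{pmatrix}1&0&0\\0&1-t&t\\0&1&0\end{pmatrix}$. For a matrix $A$ with Laurent polynomial entries, $\overline{A}$ denotes substitution $t\mapsto t^{-1}$ in every entry. Let $J_3=\begin{pmatrix}1&-t^{-1}&-t^{-1}\\-t&1&-t^{-1}\\-t&-t&1\end{pmatrix}$, $v=(t,t^2,t^3)$ (a row vector), $\vec{1}=(1,1,1)^T$, and the formal Burau group $\mathcal{B}=\{A\in\mathrm{GL}(3,\mathbb{Z}[t,t^{-1}]) : vA=v,\ A\vec 1=\vec 1,\ \overline{A}J_3A^T=J_3\}$. *)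

(* Defs.v *)
From HB Require Import structures.
From mathcomp Require Import all_boot all_order all_algebra.
From mathcomp Require Import fraction.
From mathcomp Require Import generic_quotient.
Set Implicit Arguments. Unset Strict Implicit. Unset Printing Implicit Defensive.
Import Order.TTheory GRing.Theory Num.Theory.
Local Open Scope ring_scope.

(* Z[t,t^-1] is realised inside its fraction field K = Frac(Z[t]). *)
Definition K := {fraction {poly int}}.
Definition tf (p : {poly int}) : K := FracField.tofrac p.
Definition T : K := tf 'X.

Definition laurent (x : K) : Prop :=
  exists (p : {poly int}) (n : nat), x = tf p / T ^+ n.

Definition subst_inv (p : {poly int}) : K := (map_poly (fun c : int => c%:~R : K) p).[T^-1].
Definition bar (x : K) : K :=
  subst_inv (\n_(repr x)) / subst_inv (\d_(repr x)).
Definition barmx (A : 'M[K]_3) : 'M[K]_3 := map_mx bar A.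

Definition GL3_laurent (A : 'M[K]_3) : Prop :=
  (forall i j, laurent (A i j)) /\ A \in unitmx /\
  (forall i j, laurent (invmx A i j)).

Definition s1 : 'M[K]_3 :=
  \matrix_(i < 3, j < 3)
   nth 0 (nth [::] [:: [:: 1 - T; T; 0]; [:: 1; 0; 0]; [:: 0; 0; 1]] i) j.
Definition s2 : 'M[K]_3 :=
  \matrix_(i < 3, j < 3)
   nth 0 (nth [::] [:: [:: 1; 0; 0]; [:: 0; 1 - T; T]; [:: 0; 1; 0]] i) j.
Definition J3 : 'M[K]_3 :=
  \matrix_(i < 3, j < 3)
   nth 0 (nth [::] [:: [:: 1; - T^-1; - T^-1]; [:: - T; 1; - T^-1]; [:: - T; - T; 1]] i) j.
Definition vv : 'rV[K]_3 := \row_(j < 3) [:: T; T ^+ 2; T ^+ 3]`_j.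
Definition one3 : 'cV[K]_3 := const_mx 1.

Definition formal_burau (A : 'M[K]_3) : Prop :=
  GL3_laurent A /\ vv *m A = vv /\ A *m one3 = one3 /\
  barmx A *m J3 *m A^T = J3.

Definition betaDelta : 'M[K]_3 := (s1 *m s2 *m s1) *m (s1 *m s2 *m s1).

Inductive burau_image : 'M[K]_3 -> Prop :=
  | bi_one : burau_image 1%:M
  | bi_s1 A : burau_image A -> burau_image (A *m s1)
  | bi_s2 A : burau_image A -> burau_image (A *m s2)
  | bi_s1i A : burau_image A -> burau_image (A *m invmx s1)
  | bi_s2i A : burau_image A -> burau_image (A *m invmx s2).

Definition center_of (G : 'M[K]_3 -> Prop) (A : 'M[K]_3) : Prop :=
  G A /\ forall B, G B -> A *m B = B *m A.

Definition zpow (D : 'M[K]_3) (k : int) : 'M[K]_3 :=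
  match k with
  | Posz n => D ^+ n
  | Negz n => (invmx D) ^+ n.+1
  end.

(* Main.v *)
From HB Require Import structures.
Require Import Defs.
From mathcomp Require Import all_boot all_order all_algebra.
From mathcomp Require Import fraction generic_quotient.
From mathcomp Require Import ring.
Set Implicit Arguments. Unset Strict Implicit. Unset Printing Implicit Defensive.
Local Open Scope ring_scope.
Import GRing.Theory.

Lemma gen_si (F : fieldType) (t a s c : F) : t != 0 -> a * s + c * (t * a) = t * a * (s / t + c).
Proof. move=> ht. field. by []. Qed.
Lemma gen_sub (F : fieldType) (a b c d : F) : b != 0 -> d != 0 -> a / b - c / d = (a * d - c * b) / (b * d).
Proof. move=> hb hd. field. by rewrite hb hd. Qed.
Lemma gen_mul (F : fieldType) (a b c d : F) : b != 0 -> d != 0 -> a / b * (c / d) = (a * c) / (b * d).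
Proof. move=> hb hd. field. by rewrite hb hd. Qed.

Lemma fracE (x : K) : x = tf (\n_(repr x)) / tf (\d_(repr x)).
Proof.
have hd : \d_(repr x) != 0 := denom_ratioP _.
apply: (canRL (mulfK _)); first by rewrite /tf tofrac_eq0.
have H (p : {poly int}) : tf p = (\pi_K (Ratio p 1))%qT by rewrite /tf; rewrite piE.
rewrite !H.
rewrite -{1}[x]reprK.
rewrite -[_ * _]FracField.pi_mul.
apply/eqmodP. rewrite /= equivfE /FracField.mulf !numden_Ratio ?mulr1 ?oner_neq0 ?mulf_neq0 //.
by rewrite mulrC.
Qed.

Lemma tfM p q : tf (p * q) = tf p * tf q. Proof. exact: rmorphM. Qed.
Lemma tfD p q : tf (p + q) = tf p + tf q. Proof. exact: rmorphD. Qed.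
Lemma tfN p : tf (- p) = - tf p. Proof. exact: rmorphN. Qed.
Lemma tf1 : tf 1 = 1. Proof. exact: rmorph1. Qed.
Lemma tf0 : tf 0 = 0. Proof. exact: rmorph0. Qed.
Lemma tfX n : tf ('X^n) = T ^+ n. Proof. by rewrite /T /tf rmorphXn. Qed.
Lemma tfXn p n : tf (p ^+ n) = tf p ^+ n. Proof. exact: rmorphXn. Qed.
Lemma tfC c : tf c%:P = c%:~R.
Proof.
have -> : c%:P = c%:~R :> {poly int}.
  by rewrite -{1}[c]intz (rmorph_int (@polyC int)).
by rewrite /tf rmorph_int.
Qed.
Lemma tf_inj p q : tf p = tf q -> p = q.
Proof. by move=> h; apply/eqP; rewrite -tofrac_eq; apply/eqP. Qed.
Lemma tf_eq0 p : (tf p == 0) = (p == 0).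
Proof. exact: tofrac_eq0. Qed.
Lemma T_neq0 : T != 0.
Proof. by rewrite /T tf_eq0 polyX_eq0. Qed.

Lemma siE p : subst_inv p = (map_poly (intr : int -> K) p).[T^-1].
Proof. by []. Qed.
Lemma siM p q : subst_inv (p*q) = subst_inv p * subst_inv q.
Proof. by rewrite !siE rmorphM hornerM. Qed.
Lemma siD p q : subst_inv (p+q) = subst_inv p + subst_inv q.
Proof. by rewrite !siE rmorphD hornerD. Qed.
Lemma siN p : subst_inv (-p) = - subst_inv p.
Proof. by rewrite !siE rmorphN hornerN. Qed.
Lemma si1 : subst_inv 1 = 1.
Proof. by rewrite !siE rmorph1 hornerC. Qed.
Lemma si0 : subst_inv 0 = 0.
Proof. by rewrite !siE rmorph0 horner0. Qed.
Lemma siX : subst_inv 'X = T^-1.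
Proof. by rewrite !siE map_polyX hornerX. Qed.
Lemma siC c : subst_inv c%:P = c%:~R.
Proof. by rewrite !siE map_polyC hornerC. Qed.

Lemma si_rev (q : {poly int}) : exists r : {poly int},
  tf r = T ^+ (size q).-1 * subst_inv q /\ r`_0 = lead_coef q.
Proof.
elim/poly_ind: q => [|q c [r [Hr Hr0]]].
  by exists 0; rewrite si0 mulr0 tf0 coef0 lead_coef0.
have [->|q0] := eqVneq q 0.
  exists c%:P; rewrite mul0r add0r size_polyC siC lead_coefC coefC /=.
  by split => //; rewrite tfC; case: (c != 0); rewrite /= expr0 mul1r.
have sq : (0 < size q)%N by rewrite size_poly_gt0.
exists (r + c%:P * 'X^(size q)); split.
  rewrite size_MXaddC (negbTE q0) /= tfD tfM tfC tfX Hr siD siM siX siC.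
  rewrite -(prednK sq) exprS.
  rewrite /=; move: (T ^+ _) (subst_inv q) (c%:~R : K) T_neq0.
  generalize T => t a b d ht; exact: gen_si.
rewrite coefD coefCM coefXn.
have -> : (0 == size q) = false by move: sq; case: (size q).
rewrite mulr0 addr0 Hr0 /lead_coef size_MXaddC (negbTE q0) /=.
by rewrite coefD coefMX coefC /= -(prednK sq) /= addr0.
Qed.


Lemma si_neq0 q : q != 0 -> subst_inv q != 0.
Proof.
move=> q0; have [r [Hr Hr0]] := si_rev q.
apply/eqP => h; move: Hr; rewrite h mulr0 => /eqP; rewrite tf_eq0 => /eqP r0.
by move: Hr0; rewrite r0 coef0 => /esym/eqP; rewrite lead_coef_eq0 (negbTE q0).
Qed.

Lemma barE p q : q != 0 -> bar (tf p / tf q) = subst_inv p / subst_inv q.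
Proof.
move=> q0.
set x := tf p / tf q.
have hd : \d_(repr x) != 0 := denom_ratioP _.
have Hx := fracE x.
rewrite /bar.
have e : \n_(repr x) * q = p * \d_(repr x).
  apply: tf_inj; rewrite !tfM; move: Hx; rewrite /x => /eqP.
  by rewrite eqr_div ?tf_eq0 // => /eqP ->.
apply/eqP; rewrite eqr_div ?si_neq0 //.
by rewrite -!siM e.
Qed.

Lemma bar_is_zmod : zmod_morphism bar.
Proof.
move=> x y.
rewrite (fracE x) (fracE y).
set a := \n_(repr x); set b := \d_(repr x); set c := \n_(repr y); set d := \d_(repr y).
have b0 : b != 0 := denom_ratioP _.
have d0 : d != 0 := denom_ratioP _.
have e : tf a / tf b - tf c / tf d = tf (a * d - c * b) / tf (b * d).
  rewrite tfD tfN !tfM. have := b0; rewrite -tf_eq0 => hb. have := d0; rewrite -tf_eq0 => hd.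
  move: hb hd; generalize (tf a) (tf b) (tf c) (tf d) => a' b' c' d' hb hd.
  exact: (gen_sub a' c' hb hd).
rewrite e !barE ?mulf_neq0 //.
rewrite siD siN !siM. have := si_neq0 b0; have := si_neq0 d0.
generalize (subst_inv a) (subst_inv b) (subst_inv c) (subst_inv d) => a' b' c' d' h1 h2.
exact: (esym (gen_sub a' c' h2 h1)).
Qed.

Lemma bar_is_monoid : monoid_morphism bar.
Proof.
split.
  have -> : (1 : K) = tf 1 / tf 1 by rewrite tf1 divr1.
  by rewrite barE ?oner_neq0 // si1 divr1.
move=> x y.
rewrite (fracE x) (fracE y).
set a := \n_(repr x); set b := \d_(repr x); set c := \n_(repr y); set d := \d_(repr y).
have b0 : b != 0 := denom_ratioP _.
have d0 : d != 0 := denom_ratioP _.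
have e : tf a / tf b * (tf c / tf d) = tf (a * c) / tf (b * d).
  rewrite !tfM. have := b0; rewrite -tf_eq0 => hb. have := d0; rewrite -tf_eq0 => hd.
  move: hb hd; generalize (tf a) (tf b) (tf c) (tf d) => a' b' c' d' hb hd.
  exact: (gen_mul a' c' hb hd).
rewrite e !barE ?mulf_neq0 //.
rewrite !siM. have := si_neq0 b0; have := si_neq0 d0.
generalize (subst_inv a) (subst_inv b) (subst_inv c) (subst_inv d) => a' b' c' d' h1 h2.
exact: (esym (gen_mul a' c' h2 h1)).
Qed.

HB.instance Definition _ := GRing.isZmodMorphism.Build K K bar bar_is_zmod.
HB.instance Definition _ := GRing.isMonoidMorphism.Build K K bar bar_is_monoid.

Lemma barT : bar T = T^-1.
Proof.
rewrite {1}(_ : T = tf 'X / tf 1); last by rewrite tf1 divr1.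
by rewrite barE ?oner_neq0 // si1 siX divr1.
Qed.

Lemma barmxM (A B : 'M[K]_3) : barmx (A *m B) = barmx A *m barmx B.
Proof. exact: map_mxM. Qed.
Lemma barmxV (A : 'M[K]_3) : barmx (invmx A) = invmx (barmx A).
Proof. exact: map_invmx. Qed.


Lemma laurent_tf p : laurent (tf p).
Proof. by exists p, 0%N; rewrite expr0 divr1. Qed.

Lemma laurentD x y : laurent x -> laurent y -> laurent (x + y).
Proof.
move=> [p [n ->]] [q [m ->]].
exists (p * 'X^m + q * 'X^n), (n + m)%N.
rewrite tfD !tfM !tfX exprD.
move: (tf p) (tf q) T_neq0; generalize T => t a b ht.
by rewrite addf_div ?expf_neq0.
Qed.

Lemma laurentM x y : laurent x -> laurent y -> laurent (x * y).
Proof.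
move=> [p [n ->]] [q [m ->]].
exists (p * q), (n + m)%N.
rewrite !tfM exprD.
move: (tf p) (tf q) T_neq0; generalize T => t a b ht.
by rewrite mulf_div.
Qed.

Lemma laurentN x : laurent x -> laurent (- x).
Proof.
move=> [p [n ->]]; exists (- p), n; by rewrite tfN mulNr.
Qed.

Lemma laurentB x y : laurent x -> laurent y -> laurent (x - y).
Proof. by move=> hx hy; apply: laurentD => //; apply: laurentN. Qed.

Lemma laurent0 : laurent 0.
Proof. by rewrite -tf0; apply: laurent_tf. Qed.
Lemma laurent1 : laurent 1.
Proof. by rewrite -tf1; apply: laurent_tf. Qed.
Lemma laurentT : laurent T.
Proof. exact: laurent_tf. Qed.
Lemma laurentTV : laurent T^-1.
Proof. by exists 1, 1%N; rewrite tf1 expr1 div1r. Qed.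
Lemma laurentn (n : nat) : laurent n%:R.
Proof. elim: n => [|n IH]; [exact: laurent0|by rewrite mulrS; apply: laurentD => //; apply: laurent1]. Qed.
Lemma laurentX x n : laurent x -> laurent (x ^+ n).
Proof. move=> h; elim: n => [|n IH]; [by rewrite expr0; exact: laurent1| by rewrite exprS; apply: laurentM]. Qed.

Definition lmx (A : 'M[K]_3) := forall i j, laurent (A i j).

Lemma lmxM A B : lmx A -> lmx B -> lmx (A *m B).
Proof.
move=> hA hB i j; rewrite mxE.
apply: (big_ind laurent) => //; first exact: laurent0.
  by move=> x y; apply: laurentD.
by move=> k _; apply: laurentM.
Qed.

Lemma lmx1 : lmx 1%:M.
Proof. by move=> i j; rewrite mxE; apply: laurentn. Qed.

Lemma inv_uniq (A B : 'M[K]_3) : A *m B = 1%:M -> invmx A = B.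
Proof.
move=> h; have [uA uB] := mulmx1_unit h.
by rewrite -[invmx A]mulmx1 -h mulmxA (mulVmx uA) mul1mx.
Qed.

Lemma invmxM (A B : 'M[K]_3) : A \in unitmx -> B \in unitmx ->
  invmx (A *m B) = invmx B *m invmx A.
Proof.
move=> uA uB; apply: inv_uniq.
by rewrite mulmxA -(mulmxA A B (invmx B)) (mulmxV uB) mulmx1 (mulmxV uA).
Qed.

Definition Jc (A : 'M[K]_3) := barmx A *m J3 *m A^T = J3.

Lemma JcM A B : Jc A -> Jc B -> Jc (A *m B).
Proof.
rewrite /Jc => hA hB.
rewrite barmxM trmx_mul !mulmxA -(mulmxA (barmx A) (barmx B) J3).
by rewrite -(mulmxA (barmx A) (barmx B *m J3) B^T) hB.
Qed.

Lemma JcV A : A \in unitmx -> Jc A -> Jc (invmx A).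
Proof.
rewrite /Jc => uA hA.
have ub : barmx A \in unitmx by rewrite /barmx map_unitmx.
have ut : A^T \in unitmx by rewrite unitmx_tr.
rewrite barmxV trmx_inv -{1}hA.
by rewrite !mulmxA (mulVmx ub) mul1mx -(mulmxA J3) (mulmxV ut) mulmx1.
Qed.

Lemma Jc1 : Jc 1%:M.
Proof. by rewrite /Jc /barmx map_mx1 trmx1 mul1mx mulmx1. Qed.

Lemma fbM A B : formal_burau A -> formal_burau B -> formal_burau (A *m B).
Proof.
move=> [[lA [uA liA]] [vA [oA jA]]] [[lB [uB liB]] [vB [oB jB]]].
split; [split; [|split]|split; [|split]].
- exact: lmxM.
- by rewrite unitmx_mul uA uB.
- rewrite (invmxM uA uB); exact: (lmxM liB liA).
- by rewrite mulmxA vA vB.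
- by rewrite -mulmxA oB oA.
- exact: JcM.
Qed.

Lemma fbV A : formal_burau A -> formal_burau (invmx A).
Proof.
move=> [[lA [uA liA]] [vA [oA jA]]].
split; [split; [|split]|split; [|split]].
- exact: liA.
- by rewrite unitmx_inv.
- by rewrite invmxK.
- by rewrite -{1}vA -mulmxA (mulmxV uA) mulmx1.
- by rewrite -{1}oA mulmxA (mulVmx uA) mul1mx.
- exact: JcV.
Qed.

Lemma fb1 : formal_burau 1%:M.
Proof.
split; [split; [|split]|split; [|split]].
- exact: lmx1.
- exact: unitmx1.
- by rewrite invmx1; exact: lmx1.
- by rewrite mulmx1.
- by rewrite mul1mx.
- exact: Jc1.
Qed.


Definition i0 : 'I_3 := @Ordinal 3 0 isT.
Definition i1 : 'I_3 := @Ordinal 3 1 isT.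
Definition i2 : 'I_3 := @Ordinal 3 2 isT.

Definition s1g (F : fieldType) (t : F) : 'M[F]_3 :=
  \matrix_(i < 3, j < 3)
   nth 0 (nth [::] [:: [:: 1 - t; t; 0]; [:: 1; 0; 0]; [:: 0; 0; 1]] i) j.
Definition s2g (F : fieldType) (t : F) : 'M[F]_3 :=
  \matrix_(i < 3, j < 3)
   nth 0 (nth [::] [:: [:: 1; 0; 0]; [:: 0; 1 - t; t]; [:: 0; 1; 0]] i) j.

Ltac mxcase := apply/matrixP; case => [[|[|[|?]]] ?] //; case => [[|[|[|?]]] ?] //;
  do 4 (rewrite ?mxE /= ?big_ord_recl ?big_ord0 /=).

Definition Rg (F : fieldType) (t : F) : 'M[F]_3 := \matrix_(i < 3, j < 3) t ^+ j.
Definition Ng (F : fieldType) (t : F) (b x : F) : 'M[F]_3 := b%:M + x *: Rg t.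
Definition dg (F : fieldType) (t : F) : F := 1 + t + t ^+ 2.

Lemma ordE3 (i : 'I_3) : i = i0 \/ i = i1 \/ i = i2.
Proof.
case: i => [[|[|[|n]]] h]; [left|right;left|right;right|by []]; exact/val_inj.
Qed.

Lemma g9 (F : fieldType) (t : F) (A : 'M[F]_3) :
  A *m s1g t = s1g t *m A -> A *m s2g t = s2g t *m A ->
  A *m (const_mx 1 : 'cV[F]_3) = const_mx 1 ->
  A = Ng t (A i0 i0 - A i1 i0) (A i1 i0) /\
  (A i0 i0 - A i1 i0) + A i1 i0 * dg t = 1.
Proof.
move=> h1 h2 h3.
have E (B C : 'M[F]_3) (i j : 'I_3) : B = C -> B i j = C i j by move=> ->.
have a1 := E _ _ i2 i0 h1.
have a2 := E _ _ i1 i0 h1.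
have a3 := E _ _ i1 i2 h1.
have a4 := E _ _ i1 i1 h1.
have b1 := E _ _ i0 i1 h2.
have b2 := E _ _ i2 i1 h2.
have b3 := E _ _ i2 i0 h2.
have b4 := E _ _ i2 i2 h2.
have r0 : (A *m (const_mx 1 : 'cV[F]_3)) i0 ord0 = (const_mx 1 : 'cV[F]_3) i0 ord0 by rewrite h3.
move: a1 a2 a3 a4 b1 b2 b3 b4 r0.
rewrite !mxE !big_ord_recl !big_ord0 !mxE /=.
have L0 : ord0 = i0 :> 'I_3 by apply/val_inj.
have L1 : lift ord0 ord0 = i1 :> 'I_3 by apply/val_inj.
have L2 : lift ord0 (lift ord0 ord0) = i2 :> 'I_3 by apply/val_inj.
rewrite !L2 !L1 !L0.
rewrite ?mul0r ?mulr0 ?mulr1 ?mul1r ?addr0 ?add0r.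
move=> a1 a2 a3 a4 b1 b2 b3 b4 r0.
have E01 : A i0 i1 = A i1 i0 * t by rewrite -a4.
have E02 : A i0 i2 = A i1 i0 * t ^+ 2.
  apply/(addrI (A i0 i1 * (1 - t))); rewrite b1 E01; ring.
have E20 : A i2 i0 = A i1 i0 by [].
have E21 : A i2 i1 = A i1 i0 * t.
  rewrite -b3; apply/(addrI (A i2 i0 * (1 - t))); rewrite a1; ring.
have E12 : A i1 i2 = A i1 i0 * t ^+ 2 by rewrite a3 E02.
have E11 : A i1 i1 = A i0 i0 - A i1 i0 + A i1 i0 * t.
  apply/(addrI (A i1 i0 * (1 - t))); rewrite a2; ring.
have E22 : A i2 i2 = A i0 i0 - A i1 i0 + A i1 i0 * t ^+ 2.
  apply/(addrI (A i2 i1 * (1 - t))); rewrite b2 E11 E21; ring.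
split.
  apply/matrixP => i j.
  rewrite !mxE.
  case: (ordE3 i) => [->|[->|->]]; case: (ordE3 j) => [->|[->|->]] /=;
  rewrite ?E01 ?E02 ?E20 ?E21 ?E12 ?E11 ?E22 /= ?mulr1n ?mulr0n; ring.
transitivity (A i0 i0 + (A i0 i1 + A i0 i2)); last exact: r0.
rewrite E01 E02 /dg; ring.
Qed.

Definition S1ig (F : fieldType) (t : F) : 'M[F]_3 :=
  \matrix_(i < 3, j < 3)
   nth 0 (nth [::] [:: [:: 0; 1; 0]; [:: t^-1; 1 - t^-1; 0]; [:: 0; 0; 1]] i) j.
Definition S2ig (F : fieldType) (t : F) : 'M[F]_3 :=
  \matrix_(i < 3, j < 3)
   nth 0 (nth [::] [:: [:: 1; 0; 0]; [:: 0; 0; 1]; [:: 0; t^-1; 1 - t^-1]] i) j.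
Definition J3g (F : fieldType) (t : F) : 'M[F]_3 :=
  \matrix_(i < 3, j < 3)
   nth 0 (nth [::] [:: [:: 1; - t^-1; - t^-1]; [:: - t; 1; - t^-1]; [:: - t; - t; 1]] i) j.
Definition vvg (F : fieldType) (t : F) : 'rV[F]_3 := \row_(j < 3) [:: t; t ^+ 2; t ^+ 3]`_j.
Definition c1g (F : fieldType) : 'cV[F]_3 := const_mx 1.
Definition Mg (F : fieldType) (t u : F) : 'M[F]_3 := Ng t u ((1 - u) / dg t).
Definition cg (F : fieldType) (t : F) : 'cV[F]_3 := \col_(i < 3) [:: t; -1; 0]`_i.

Lemma g1 (F : fieldType) (t : F) : t != 0 -> s1g t *m S1ig t = 1%:M.
Proof. move=> ht; mxcase; field; by rewrite ?ht. Qed.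
Lemma g2 (F : fieldType) (t : F) : t != 0 -> s2g t *m S2ig t = 1%:M.
Proof. move=> ht; mxcase; field; by rewrite ?ht. Qed.
Lemma g3 (F : fieldType) (t : F) : vvg t *m s1g t = vvg t.
Proof. mxcase; ring. Qed.
Lemma g3' (F : fieldType) (t : F) : vvg t *m s2g t = vvg t.
Proof. mxcase; ring. Qed.
Lemma g4 (F : fieldType) (t : F) : s1g t *m c1g F = c1g F.
Proof. mxcase; ring. Qed.
Lemma g4' (F : fieldType) (t : F) : s2g t *m c1g F = c1g F.
Proof. mxcase; ring. Qed.
Lemma g7 (F : fieldType) (t : F) : t != 0 -> s1g t^-1 *m J3g t *m (s1g t)^T = J3g t.
Proof. move=> ht; mxcase; field; by rewrite ?ht. Qed.
Lemma g7' (F : fieldType) (t : F) : t != 0 -> s2g t^-1 *m J3g t *m (s2g t)^T = J3g t.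
Proof. move=> ht; mxcase; field; by rewrite ?ht. Qed.

Lemma g10 (F : fieldType) (t b x : F) : dg t != 0 -> b + x * dg t = 1 -> Ng t b x = Mg t b.
Proof.
move=> hd h; rewrite /Mg; congr Ng.
by rewrite -h addrC addKr mulfK.
Qed.

Lemma g11 (F : fieldType) (t u w : F) : dg t != 0 -> Mg t u *m Mg t w = Mg t (u * w).
Proof.
rewrite /dg => hd; rewrite /Mg /Ng /dg; mxcase; rewrite ?mulr1n ?mulr0n; field; by rewrite ?hd.
Qed.

Lemma g12 (F : fieldType) (t : F) : Mg t 1 = 1%:M.
Proof. by rewrite /Mg /Ng subrr mul0r scale0r addr0. Qed.

Lemma g13 (F : fieldType) (t u : F) : Mg t u i0 i0 - Mg t u i1 i0 = u /\ Mg t u i1 i0 = (1 - u) / dg t.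
Proof. rewrite /Mg /Ng !mxE /= ?mulr1n ?mulr0n; split; ring. Qed.

Lemma gR (F : fieldType) (t : F) : t != 0 -> Rg t = t^-1 *: (c1g F *m vvg t).
Proof. move=> ht; rewrite /Rg; mxcase; field; by rewrite ?ht. Qed.

Lemma g14 (F : fieldType) (t u : F) (B : 'M[F]_3) : t != 0 ->
  B *m c1g F = c1g F -> vvg t *m B = vvg t -> Mg t u *m B = B *m Mg t u.
Proof.
move=> ht h1 h2.
have RB : Rg t *m B = Rg t by rewrite gR // -scalemxAl -mulmxA h2.
have BR : B *m Rg t = Rg t by rewrite gR // -scalemxAr mulmxA h1.
rewrite /Mg /Ng mulmxDl mulmxDr mul_scalar_mx mul_mx_scalar.
by rewrite -scalemxAl RB -scalemxAr BR.
Qed.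

Lemma g15 (F : fieldType) (t : F) : dg t != 0 ->
  (s1g t *m s2g t *m s1g t) *m (s1g t *m s2g t *m s1g t) = Mg t (t ^+ 3).
Proof.
rewrite /dg => hd; rewrite /Mg /Ng /dg; mxcase; rewrite ?mulr1n ?mulr0n; field; by rewrite ?hd.
Qed.

Lemma g16 (F : fieldType) (t : F) : Mg t 0 *m cg t = 0.
Proof. rewrite /Mg /Ng /dg; mxcase; rewrite ?mulr1n ?mulr0n; ring. Qed.


Lemma polyXdec (p : {poly int}) : exists p1 c, p = p1 * 'X + c%:P.
Proof. elim/poly_ind: p => [|p c _]; [by exists 0, 0; rewrite mul0r add0r|by exists p, c]. Qed.

Lemma int_unit (c e : int) : e * c = 1 -> exists s : bool, c = (-1) ^+ s.
Proof.
move/intUnitRing.unitzPl; rewrite qualifE /= => /orP [/eqP ->|/eqP ->]; by [exists false|exists true].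
Qed.

Lemma PX (N : nat) : forall p q : {poly int}, p * q = 'X^N ->
  exists (s : bool) (a : nat), p = (-1) ^+ s *: 'X^a.
Proof.
elim: N => [|N IH] p q h.
  have up : p \is a GRing.unit by apply/unitrPr; exists q; rewrite h expr0.
  move: up; rewrite poly_unitE => /andP [/eqP sp u0].
  have pE : p = (p`_0)%:P by apply: size1_polyC; rewrite sp.
  have [e he] : exists e, e * p`_0 = 1 by move/unitrPr: u0 => [e he]; exists e; rewrite mulrC.
  have [s hs] := int_unit he.
  by exists s, 0%N; rewrite pE hs expr0 alg_polyC.
have c0 : p`_0 * q`_0 = 0.
  by move: (congr1 (fun r : {poly int} => r`_0) h); rewrite coef0M coefXn.
have [p1 [c pE]] := polyXdec p.
have [q1 [e qE]] := polyXdec q.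
have Xn0 : ('X : {poly int}) != 0 by rewrite polyX_eq0.
move: c0; rewrite pE qE !coefD !coefMX !coefC /= !add0r => /eqP; rewrite mulf_eq0 => /orP [/eqP c0|/eqP e0].
  move: h; rewrite pE qE c0 addr0 exprS => h.
  have h' : p1 * q = 'X^N.
    apply: (mulfI Xn0); rewrite -h qE mulrA; ring.
  have [s [a ha]] := IH _ _ h'.
  by exists s, a.+1; rewrite ha exprSr scalerAl.
move: h; rewrite pE qE e0 addr0 exprS => h.
have h' : (p1 * 'X + c%:P) * q1 = 'X^N.
  apply: (mulfI Xn0); rewrite -h; ring.
exact: IH _ _ h'.
Qed.

Definition ev7 (p : {poly int}) : 'F_7 := (p.[2%:R])%:~R.

Lemma ev7M p q : ev7 (p * q) = ev7 p * ev7 q.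
Proof. by rewrite /ev7 hornerM rmorphM. Qed.
Lemma ev7B p q : ev7 (p - q) = ev7 p - ev7 q.
Proof. by rewrite /ev7 hornerD hornerN rmorphB. Qed.
Lemma ev7Xn n : ev7 ('X^n) = 2%:R ^+ n.
Proof. by rewrite /ev7 hornerXn rmorphXn /=. Qed.
Lemma ev7Z (s : bool) p : ev7 ((-1) ^+ s *: p) = (-1) ^+ s * ev7 p.
Proof. by rewrite /ev7 hornerZ rmorphM rmorphXn rmorphN1. Qed.
Lemma ev7d : ev7 (1 + 'X + 'X^2) = 0.
Proof. rewrite /ev7 !hornerE. by apply/eqP. Qed.

Lemma two7 n : (2%:R : 'F_7) ^+ n = 2%:R ^+ (n %% 3).
Proof.
rewrite {1}(divn_eq n 3) exprD mulnC exprM.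
have -> : (2%:R : 'F_7) ^+ 3 = 1 by apply/eqP.
by rewrite expr1n mul1r.
Qed.

Lemma fin7 : [forall s : bool, forall i : 'I_3, forall j : 'I_3,
  ((2%:R : 'F_7) ^+ i == (-1) ^+ s * 2%:R ^+ j) ==> ((s == false) && (i == j :> nat))].
Proof. apply/forallP => s; apply/forallP => i; apply/forallP => j.
case: s; case: i => [[|[|[|?]]] ?] //; case: j => [[|[|[|?]]] ?] //; apply/implyP; by move/eqP.
Qed.

Lemma Z7lem (r : {poly int}) (n a l : nat) (s : bool) :
  r * (1 + 'X + 'X^2) * 'X^n = ('X^n - (-1) ^+ s *: 'X^a) * 'X^l ->
  s = false /\ (n %% 3 = a %% 3)%N.
Proof.
move=> /(congr1 ev7); rewrite !ev7M ev7d mulr0 mul0r ev7B ev7Z !ev7Xn => /esym /eqP.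
rewrite mulf_eq0 expf_eq0 (_ : (2%:R : 'F_7) == 0 = false); last by [].
rewrite andbF orbF subr_eq0 two7 (two7 a) => /eqP h.
have hi : (n %% 3 < 3)%N by rewrite ltn_pmod.
have hj : (a %% 3 < 3)%N by rewrite ltn_pmod.
move: fin7 => /forallP /(_ s) /forallP /(_ (Ordinal hi)) /forallP /(_ (Ordinal hj)) /implyP.
rewrite /= h eqxx => /(_ isT) /andP [/eqP -> /eqP ->]; by [].
Qed.


Lemma s1E : s1 = s1g T. Proof. reflexivity. Qed.
Lemma s2E : s2 = s2g T. Proof. reflexivity. Qed.
Lemma J3E : J3 = J3g T. Proof. reflexivity. Qed.
Lemma vvE : vv = vvg T. Proof. reflexivity. Qed.
Lemma one3E : one3 = c1g K. Proof. reflexivity. Qed.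

Lemma map_s1g (F : fieldType) (f : {rmorphism F -> F}) (t : F) : map_mx f (s1g t) = s1g (f t).
Proof. mxcase; by rewrite ?rmorphB ?rmorph1 ?rmorph0. Qed.
Lemma map_s2g (F : fieldType) (f : {rmorphism F -> F}) (t : F) : map_mx f (s2g t) = s2g (f t).
Proof. mxcase; by rewrite ?rmorphB ?rmorph1 ?rmorph0. Qed.

Lemma g17 (F : fieldType) (t u : F) (n : nat) : dg t != 0 -> (Mg t u) ^+ n = Mg t (u ^+ n).
Proof.
move=> hd; elim: n => [|n IH]; first by rewrite !expr0 g12.
by rewrite exprS IH [_ * _]g11 // -exprS.
Qed.

Lemma dT : dg T != 0.
Proof.
have -> : dg T = tf (1 + 'X + 'X^2) by rewrite /dg !tfD tf1 tfX.
rewrite tf_eq0; apply/eqP => /(congr1 (fun p : {poly int} => p`_0)).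
by rewrite !coefD coef1 coefX coefXn coef0.
Qed.

Ltac laur := repeat first [apply: laurentB | apply: laurentD | apply: laurentN | apply: laurent1 | apply: laurent0 | apply: laurentT | apply: laurentTV].

Lemma fb_s1 : formal_burau s1.
Proof.
have h := g1 T_neq0.
have [u1 _] := mulmx1_unit h.
rewrite s1E in u1 *.
split; [split; [|split]|split; [|split]].
- move=> i j; rewrite mxE; case: (ordE3 i) => [->|[->|->]]; case: (ordE3 j) => [->|[->|->]] /=; laur.
- exact: u1.
- rewrite (inv_uniq h) => i j; rewrite mxE; case: (ordE3 i) => [->|[->|->]]; case: (ordE3 j) => [->|[->|->]] /=; laur.
- rewrite vvE; exact: g3.
- rewrite one3E; exact: g4.
- rewrite /Jc /barmx (map_s1g bar) /= barT J3E; exact: g7 T_neq0.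
Qed.

Lemma fb_s2 : formal_burau s2.
Proof.
have h := g2 T_neq0.
have [u1 _] := mulmx1_unit h.
rewrite s2E in u1 *.
split; [split; [|split]|split; [|split]].
- move=> i j; rewrite mxE; case: (ordE3 i) => [->|[->|->]]; case: (ordE3 j) => [->|[->|->]] /=; laur.
- exact: u1.
- rewrite (inv_uniq h) => i j; rewrite mxE; case: (ordE3 i) => [->|[->|->]]; case: (ordE3 j) => [->|[->|->]] /=; laur.
- rewrite vvE; exact: g3'.
- rewrite one3E; exact: g4'.
- rewrite /Jc /barmx (map_s2g bar) /= barT J3E; exact: g7' T_neq0.
Qed.


Lemma TXn0 n : T ^+ n != 0.
Proof. exact: (expf_neq0 n T_neq0). Qed.

Lemma nat_mod3 (n a : nat) : (n %% 3 = a %% 3)%N ->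
  (exists k, a = n + 3 * k)%N \/ (exists k, n = a + 3 * k.+1)%N.
Proof.
move=> h.
case: (leqP n a) => hna.
  left; have : (3 %| a - n)%N by rewrite -eqn_mod_dvd // h.
  move=> /dvdnP [k hk]; exists k; by rewrite mulnC -hk subnKC.
right; have : (3 %| n - a)%N by rewrite -eqn_mod_dvd ?(ltnW hna) // h.
move=> /dvdnP [k hk]; exists k.-1.
have k0 : (0 < k)%N.
  by move: hk; case: k => //= /eqP; rewrite subn_eq0 leqNgt hna.
by rewrite prednK // mulnC -hk subnKC // ltnW.
Qed.

Lemma unit_form (b : K) : b != 0 -> laurent b -> laurent b^-1 -> laurent ((1 - b) / dg T) ->
  (exists n, b = (T ^+ 3) ^+ n) \/ (exists n, b = ((T ^+ 3)^-1) ^+ n.+1).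
Proof.
move=> b0 [p [n hb]] [q [m hbi]] [r [l hx]].
have ep : tf p = b * T ^+ n by rewrite hb (divfK (TXn0 n)).
have eq : tf q = b^-1 * T ^+ m by rewrite hbi (divfK (TXn0 m)).
have pq : p * q = 'X^(n + m).
  apply: tf_inj; rewrite tfM ep eq tfX mulrACA (mulfV b0) mul1r -exprD //.
have [s [a pE]] := PX pq.
have eb : b * T ^+ n = (-1) ^+ s * T ^+ a.
  rewrite -ep pE scaler_sign; case: s {pE} => /=; by rewrite ?tfN tfX ?expr1 ?mulN1r ?expr0 ?mul1r.
have hd := dT.
have er : tf r = (1 - b) / dg T * T ^+ l by rewrite hx (divfK (TXn0 l)).
have hpoly : r * (1 + 'X + 'X^2) * 'X^n = ('X^n - (-1) ^+ s *: 'X^a) * 'X^l.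
  apply: tf_inj; rewrite !tfM er.
  have -> : tf (1 + 'X + 'X^2) = dg T by rewrite /dg !tfD tf1 tfX.
  rewrite tfD tfN.
  have -> : tf ((-1) ^+ s *: 'X^a) = (-1) ^+ s * T ^+ a.
    rewrite scaler_sign; case: s {pE eb} => /=; by rewrite ?tfN tfX ?expr1 ?mulN1r ?expr0 ?mul1r.
  rewrite !tfX.
  rewrite -eb.
  rewrite -(mulrA ((1 - b) / dg T)) (mulrC (T ^+ l)) mulrA (divfK hd).
  ring.
have [s0 hm] := Z7lem hpoly.
move: eb; rewrite s0 expr0 mul1r => eb.
case: (nat_mod3 hm) => [[k ak]|[k nk]].
  left; exists k.
  apply: (mulIf (TXn0 n)); rewrite eb ak exprD exprM mulrC; reflexivity.
right; exists k.
apply: (mulIf (TXn0 n)).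
rewrite eb nk exprD exprM exprVn mulrCA.
have h3 : T ^+ 3 ^+ k.+1 != 0 := expf_neq0 _ (TXn0 3).
rewrite (mulVf h3) mulr1; reflexivity.
Qed.


Lemma DeltaE : betaDelta = Mg T (T ^+ 3).
Proof. rewrite /betaDelta s1E s2E; exact: (g15 dT). Qed.

Lemma DeltaVE : invmx betaDelta = Mg T (T ^+ 3)^-1.
Proof.
apply: inv_uniq; rewrite DeltaE (g11 _ _ dT) (mulfV (TXn0 3)); exact: g12.
Qed.

Lemma zpowE (k : int) : exists u, zpow betaDelta k = Mg T u.
Proof.
case: k => n /=.
  by exists ((T ^+ 3) ^+ n); rewrite DeltaE (g17 _ _ dT).
by exists ((T ^+ 3)^-1 ^+ n.+1); rewrite DeltaVE (g17 _ _ dT).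
Qed.

Lemma fbX A n : formal_burau A -> formal_burau (A ^+ n).
Proof.
move=> hA; elim: n => [|n IH]; first by rewrite expr0; exact: fb1.
rewrite exprS; exact: (fbM hA IH).
Qed.

Lemma fb_Delta : formal_burau betaDelta.
Proof.
rewrite /betaDelta; have h := fbM (fbM fb_s1 fb_s2) fb_s1; exact: (fbM h h).
Qed.

Lemma fb_zpow k : formal_burau (zpow betaDelta k).
Proof.
case: k => n /=; first exact: (fbX n fb_Delta).
exact: (fbX n.+1 (fbV fb_Delta)).
Qed.

Lemma zpow_comm k B : formal_burau B -> zpow betaDelta k *m B = B *m zpow betaDelta k.
Proof.
move=> [_ [vB [oB _]]]; have [u ->] := zpowE k.
rewrite vvE in vB; rewrite one3E in oB.
exact: (g14 u T_neq0 oB vB).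
Qed.

Lemma core A : formal_burau A -> A *m s1 = s1 *m A -> A *m s2 = s2 *m A ->
  exists k, A = zpow betaDelta k.
Proof.
move=> [[lA [uA liA]] [vA [oA jA]]] h1 h2.
rewrite s1E in h1; rewrite s2E in h2; rewrite one3E in oA.
have [AE hc] := g9 h1 h2 oA.
move: AE hc; set b := A i0 i0 - A i1 i0; set x := A i1 i0 => AE hc.
have AM : A = Mg T b by rewrite {1}AE; exact: (g10 dT hc).
have lb : laurent b := laurentB (lA i0 i0) (lA i1 i0).
have lx : laurent ((1 - b) / dg T).
  have := lA i1 i0; rewrite {1}AM; by case: (g13 T b) => _ ->.
have b0 : b != 0.
  apply/eqP => b0.
  have h0 : A *m cg T = 0 by rewrite AM b0; exact: g16.
  have := congr1 (mulmx (invmx A)) h0.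
  rewrite mulmxA (mulVmx uA) mul1mx mulmx0 => /matrixP /(_ i1 ord0).
  rewrite !mxE /= => /eqP; rewrite oppr_eq0 oner_eq0; by [].
have iA : invmx A = Mg T b^-1.
  apply: inv_uniq; rewrite AM (g11 _ _ dT) (mulfV b0); exact: g12.
have lbi : laurent b^-1.
  have := laurentB (liA i0 i0) (liA i1 i0); rewrite iA; by case: (g13 T b^-1) => ->.
case: (unit_form b0 lb lbi lx) => [[n bn]|[n bn]].
  by exists (Posz n); rewrite /= DeltaE (g17 _ _ dT) AM bn.
by exists (Negz n); rewrite /= DeltaVE (g17 _ _ dT) AM bn.
Qed.


Lemma img_fb A : burau_image A -> formal_burau A.
Proof.
elim => {A} [|A _ IH|A _ IH|A _ IH|A _ IH].
- exact: fb1.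
- exact: (fbM IH fb_s1).
- exact: (fbM IH fb_s2).
- exact: (fbM IH (fbV fb_s1)).
- exact: (fbM IH (fbV fb_s2)).
Qed.

Lemma imM A B : burau_image A -> burau_image B -> burau_image (A *m B).
Proof.
move=> hA; elim => {B} [|B _ IH|B _ IH|B _ IH|B _ IH].
- by rewrite mulmx1.
- rewrite mulmxA; exact: bi_s1.
- rewrite mulmxA; exact: bi_s2.
- rewrite mulmxA; exact: bi_s1i.
- rewrite mulmxA; exact: bi_s2i.
Qed.

Lemma img_s1 : burau_image s1.
Proof. rewrite -(mul1mx s1); exact: (bi_s1 bi_one). Qed.
Lemma img_s2 : burau_image s2.
Proof. rewrite -(mul1mx s2); exact: (bi_s2 bi_one). Qed.
Lemma img_s1i : burau_image (invmx s1).
Proof. rewrite -(mul1mx (invmx s1)); exact: (bi_s1i bi_one). Qed.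
Lemma img_s2i : burau_image (invmx s2).
Proof. rewrite -(mul1mx (invmx s2)); exact: (bi_s2i bi_one). Qed.

Lemma imX A n : burau_image A -> burau_image (A ^+ n).
Proof.
move=> hA; elim: n => [|n IH]; first by rewrite expr0; exact: bi_one.
rewrite exprS; exact: (imM hA IH).
Qed.

Lemma img_zpow k : burau_image (zpow betaDelta k).
Proof.
have u1 : s1 \in unitmx by case: fb_s1 => [[_ [u _]] _].
have u2 : s2 \in unitmx by case: fb_s2 => [[_ [u _]] _].
have u12 : s1 *m s2 \in unitmx by rewrite unitmx_mul u1 u2.
have uP : s1 *m s2 *m s1 \in unitmx by rewrite unitmx_mul u12 u1.
have iP : invmx (s1 *m s2 *m s1) = invmx s1 *m invmx s2 *m invmx s1.
  by rewrite (invmxM u12 u1) (invmxM u1 u2) mulmxA.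
have imP : burau_image (s1 *m s2 *m s1) := imM (imM img_s1 img_s2) img_s1.
have imPi : burau_image (invmx (s1 *m s2 *m s1)).
  rewrite iP; exact: (imM (imM img_s1i img_s2i) img_s1i).
case: k => n /=.
  apply: imX; rewrite /betaDelta; exact: (imM imP imP).
apply: imX; rewrite /betaDelta (invmxM uP uP); exact: (imM imPi imPi).
Qed.

Theorem corollary3p13 :
  (forall A : 'M[K]_3,
     center_of formal_burau A <-> exists k : int, A = zpow betaDelta k) /\
  (forall A : 'M[K]_3,
     center_of formal_burau A <-> center_of burau_image A).
Proof.
have P1 : forall A : 'M[K]_3,
     center_of formal_burau A <-> exists k : int, A = zpow betaDelta k.
  move=> A; split.
    move=> [fA hc]; exact: (core fA (hc _ fb_s1) (hc _ fb_s2)).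
  move=> [k ->]; split; first exact: fb_zpow.
  move=> B hB; exact: zpow_comm.
split; first exact: P1.
move=> A; split.
  move/P1 => [k ->]; split; first exact: img_zpow.
  move=> B hB; exact: (zpow_comm k (img_fb hB)).
move=> [iA hc]; apply/P1.
exact: (core (img_fb iA) (hc _ img_s1) (hc _ img_s2)).
Qed.
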